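(* Let $q(w)=w^4$, $r_1=1$, $r_2=e^{2i\pi/3}$, $r_3=e^{4i\pi/3}$, and let $R>0$. There exist $0<\lambda<1$, $\epsilon_0>0$, $l_0\ge1$ and, for each $i\in\{1,2,3\}$, a family $(U_i^l)_{l\ge l_0}$ of neighborhoods of $r_i$ whose diameters converge exponentially fast to $0$ as $l\to\infty$, such that for each $l\ge l_0$ and each $\alpha\in\mathbb{C}^*$ the map $g_\alpha(z,w):=(\lambda z+\alpha w,q^l(w))$ satisfies $$\overline{(\alpha\epsilon_0^{-1}\mathbb{D})\times(R\mathbb{D}\setminus R^{-1}\mathbb{D})}\subset g_\alpha\Big((\alpha\epsilon_0^{-1}\mathbb{D})\times\textstyle\bigcup_{i=1}^3U_i^l\Big).$$
   Context: $\mathbb{D}$ is the unit disc; $tE=\{tz:z\in E\}$ for $t\in\mathbb{C}^*$, so $\alpha\epsilon_0^{-1}\mathbb{D}$ is the disc of radius $|\alpha|/\epsilon_0$ centered at $0$. *)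

(* Defs.v *)
From Stdlib Require Import Reals.
From Coquelicot Require Import Coquelicot.
Open Scope R_scope.

Definition q (w : C) : C := (w * w * w * w)%C.

Definition qiter (l : nat) (w : C) : C := Nat.iter l q w.

Definition root3 (i : nat) : C :=
  (cos (2 * PI * INR (i - 1) / 3), sin (2 * PI * INR (i - 1) / 3)).

Definition g_map (lam : R) (alpha : C) (l : nat) (p : C * C) : C * C :=
  ((RtoC lam * fst p + alpha * snd p)%C, qiter l (snd p)).

Definition cdisc (rho : R) : C -> Prop := fun z => Cmod z < rho.

Definition closure2 (S : C * C -> Prop) : C * C -> Prop :=
  fun p => forall eps : R, 0 < eps -> exists p', S p' /\
    Cmod (fst p - fst p') < eps /\ Cmod (snd p - snd p') < eps.

(* Main.v *)
Require Import Defs.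
From Stdlib Require Import Reals Lra Lia ZArith.
From Coquelicot Require Import Coquelicot.
Open Scope R_scope.

Definition ee (a : R) : C := (cos a, sin a).

Lemma ee_mul s t a b : (RtoC s * ee a * (RtoC t * ee b))%C = (RtoC (s * t) * ee (a + b))%C.
Proof.
  unfold ee, RtoC, Cmult; simpl. rewrite cos_plus, sin_plus.
  apply injective_projections; simpl; ring.
Qed.

Lemma q_polar s a : q (RtoC s * ee a)%C = (RtoC (s ^ 4) * ee (4 * a))%C.
Proof.
  unfold q. rewrite !ee_mul. f_equal; f_equal; [ring | ring].
Qed.

Lemma qiter_polar l s a :
  qiter l (RtoC s * ee a)%C = (RtoC (s ^ (4 ^ l)) * ee (INR (4 ^ l) * a))%C.
Proof.
  induction l as [|l IH].
  - simpl. f_equal. f_equal. ring. f_equal. ring.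
  - unfold qiter in *. simpl Nat.iter. rewrite IH, q_polar.
    rewrite Nat.pow_succ_r' , <- pow_mult, mult_INR. f_equal. f_equal. f_equal. lia.
    f_equal. simpl INR. ring.
Qed.

Lemma Cmod_le_sq z B : 0 <= B -> fst z ^ 2 + snd z ^ 2 <= B ^ 2 -> Cmod z <= B.
Proof.
  intros HB H. unfold Cmod. rewrite <- (sqrt_pow2 B HB). apply sqrt_le_1_alt. exact H.
Qed.

Lemma Cmod_sq z : Cmod z ^ 2 = fst z ^ 2 + snd z ^ 2.
Proof.
  unfold Cmod. rewrite pow2_sqrt; [reflexivity|]. nra.
Qed.

Lemma Cmod_ee a : Cmod (ee a) = 1.
Proof.
  unfold Cmod, ee; simpl. pose proof (sin2_cos2 a). unfold Rsqr in H. replace (cos a * (cos a * 1) + sin a * (sin a * 1)) with 1 by nra. apply sqrt_1.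
Qed.

Lemma Cmod_tri_sub x y r : Cmod (x - y) <= Cmod (x - r) + Cmod (y - r).
Proof.
  replace (x - y)%C with ((x - r) + - (y - r))%C.
  - rewrite <- (Cmod_opp (y - r)). apply Cmod_triangle.
  - apply injective_projections; simpl; ring.
Qed.

Lemma Cmod_lower x y : Cmod x <= Cmod y + Cmod (x - y).
Proof.
  replace x with (y + (x - y))%C at 1 by (apply injective_projections; simpl; ring).
  apply Cmod_triangle.
Qed.

Lemma exp_pow_INR u n : exp u ^ n = exp (INR n * u).
Proof.
  induction n as [|n IH]. simpl. rewrite Rmult_0_l, exp_0. reflexivity.
  rewrite S_INR, <- tech_pow_Rmult, IH, <- exp_plus. f_equal. ring.
Qed.

Lemma exp_m1_bound u : Rabs (exp u - 1) <= Rabs u * exp (Rabs u).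
Proof.
  destruct (Rle_dec 0 u) as [H|H].
  - rewrite (Rabs_pos_eq u) by lra. rewrite Rabs_pos_eq.
    2: { pose proof (exp_ineq1_le u). lra. }
    pose proof (exp_ineq1_le (- u)). pose proof (exp_pos u).
    assert (exp (-u) * exp u = 1) by (rewrite <- exp_plus; replace (-u+u) with 0 by ring; apply exp_0).
    assert ((1 + - u) * exp u <= exp (-u) * exp u) by (apply Rmult_le_compat_r; lra).
    nra.
  - rewrite (Rabs_left u) by lra. rewrite Rabs_left1.
    2: { assert (exp u < exp 0) by (apply exp_increasing; lra). rewrite exp_0 in H0; lra. }
    pose proof (exp_ineq1_le u). pose proof (exp_ineq1_le (-u)). nra.
Qed.

Lemma ee_dist a d : 0 <= d <= 2 -> Cmod (ee (a + d) - ee a) <= d.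
Proof.
  intros Hd. apply Cmod_le_sq; [lra|]. unfold ee; simpl.
  pose proof (pre_cos_bound d 0 ltac:(lra) ltac:(lra)) as [Hc _].
  unfold cos_approx, cos_term in Hc. simpl in Hc.
  rewrite cos_plus, sin_plus.
  pose proof (sin2_cos2 a). pose proof (sin2_cos2 d). unfold Rsqr in *.
  nra.
Qed.

Lemma polar p : 0 < Cmod p -> exists t, -PI <= t <= PI /\ p = (RtoC (Cmod p) * ee t)%C.
Proof.
  intros Hp. destruct p as [x y]. set (r := Cmod (x, y)) in *.
  assert (Hr2 : r ^ 2 = x ^ 2 + y ^ 2) by (unfold r; rewrite Cmod_sq; reflexivity).
  assert (Hc : -1 <= x / r <= 1).
  { split; [apply Rmult_le_reg_r with r; [lra|] | apply Rmult_le_reg_r with r; [lra|]];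
    unfold Rdiv; rewrite Rmult_assoc, Rinv_l by lra; nra. }
  assert (Hs : 1 - (x / r)² = (y / r) ^ 2).
  { unfold Rsqr. apply Rmult_eq_reg_r with (r ^ 2); [|nra].
    replace ((1 - x / r * (x / r)) * r ^ 2) with (r ^ 2 - x ^ 2) by (field; lra).
    replace ((y / r) ^ 2 * r ^ 2) with (y ^ 2) by (field; lra). lra. }
  pose proof (acos_bound (x / r)). pose proof PI_RGT_0.
  destruct (Rle_dec 0 y) as [Hy|Hy].
  - exists (acos (x / r)). split; [lra|].
    unfold ee, RtoC, Cmult; simpl. rewrite cos_acos, sin_acos by lra. rewrite Hs, sqrt_pow2.
    2: { apply Rmult_le_pos; [lra| left; apply Rinv_0_lt_compat; lra]. }
    apply injective_projections; simpl; field; lra.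
  - exists (- acos (x / r)). split; [lra|].
    unfold ee, RtoC, Cmult; simpl. rewrite cos_neg, sin_neg, cos_acos, sin_acos by lra.
    replace ((y / r) ^ 2) with ((- y / r) ^ 2) in Hs by (field; lra).
    rewrite Hs, sqrt_pow2.
    2: { unfold Rdiv. apply Rmult_le_pos; [lra| left; apply Rinv_0_lt_compat; lra]. }
    apply injective_projections; simpl; field; lra.
Qed.

Lemma nat_above x : 0 <= x -> exists k : nat, x < INR k <= x + 1.
Proof.
  intros Hx. destruct (archimed x) as [H1 H2].
  exists (Z.to_nat (up x)).
  assert (0 <= up x)%Z.
  { apply le_IZR. lra. }
  rewrite INR_IZR_INZ, Z2Nat.id by assumption. lra.
Qed.

Lemma root3_val i : (1 <= i <= 3)%nat ->
  exists a, root3 i = ee a /\ 0 <= a <= 2 * PI.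
Proof.
  intros Hi. exists (2 * PI * INR (i - 1) / 3). split; [reflexivity|].
  pose proof PI_RGT_0. assert (0 <= INR (i-1) <= 2).
  { split; [apply pos_INR|]. replace 2 with (INR 2) by reflexivity. apply le_INR. lia. }
  split; [|nra]. apply Rmult_le_pos; [|lra]. nra.
Qed.

Lemma choose_root v : exists i, (1 <= i <= 3)%nat /\
  fst v * fst (root3 i) + snd v * snd (root3 i) >= Cmod v / 2.
Proof.
  destruct v as [a b]. set (m := Cmod (a, b)).
  assert (Hm : m ^ 2 = a ^ 2 + b ^ 2) by (unfold m; rewrite Cmod_sq; reflexivity).
  assert (Hm0 : 0 <= m) by apply Cmod_ge_0.
  pose proof (sqrt_lt_R0 3 ltac:(lra)) as Hs0.
  pose proof (sqrt_sqrt 3 ltac:(lra)) as Hs.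
  assert (E2 : root3 2 = (- (1/2), sqrt 3 / 2)).
  { unfold root3. simpl INR. replace (2 * PI * 1 / 3) with (PI - PI / 3) by field.
    rewrite Rtrigo_facts.cos_pi_minus, sin_PI_x, cos_PI3, sin_PI3. reflexivity. }
  assert (E3 : root3 3 = (- (1/2), - (sqrt 3 / 2))).
  { unfold root3. simpl INR. replace (2 * PI * (1 + 1) / 3) with (PI / 3 + PI) by field.
    rewrite neg_cos, neg_sin, cos_PI3, sin_PI3. reflexivity. }
  assert (E1 : root3 1 = (1, 0)).
  { unfold root3. simpl INR. replace (2 * PI * 0 / 3) with 0 by field.
    rewrite cos_0, sin_0. reflexivity. }
  destruct (Rle_dec (m / 2) a) as [Ha|Ha].
  { exists 1%nat. split; [lia|]. rewrite E1. simpl. lra. }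
  assert (Hb : sqrt 3 * Rabs b >= m + a).
  { destruct (Rle_dec (m + a) (sqrt 3 * Rabs b)) as [H|H]; [lra|].
    exfalso. assert (0 <= sqrt 3 * Rabs b) by (pose proof (Rabs_pos b); nra).
    assert (Hb2 : Rabs b ^ 2 = b ^ 2) by (rewrite RPow_abs; apply Rabs_pos_eq; nra).
    assert ((sqrt 3 * Rabs b) ^ 2 < (m + a) ^ 2) by nra.
    assert (3 * (m - a) * (m + a) < (m + a) * (m + a)) by nra.
    assert (3 * (m - a) < m + a) by nra. lra. }
  destruct (Rle_dec 0 b) as [Hb0|Hb0].
  - rewrite Rabs_pos_eq in Hb by lra. exists 2%nat. split; [lia|]. rewrite E2. simpl. lra.
  - rewrite Rabs_left in Hb by lra. exists 3%nat. split; [lia|]. rewrite E3. simpl. lra.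
Qed.

Lemma root_exists (Rr : R) (l i : nat) (p2 : C) :
  (1 <= l)%nat -> (1 <= i <= 3)%nat -> / Rr <= Cmod p2 <= Rr -> 0 < Rr ->
  exists w, qiter l w = p2 /\
    Cmod (w - root3 i) < (Rabs (ln Rr) * exp (Rabs (ln Rr)) + 2 * PI + 1) / INR (4 ^ l).
Proof.
  intros Hl Hi Hp HR.
  set (L := Rabs (ln Rr)). set (N := INR (4 ^ l)).
  assert (HN : 4 <= N).
  { unfold N. replace 4 with (INR (4 ^ 1)) by (simpl; lra). apply le_INR.
    apply Nat.pow_le_mono_r; lia. }
  set (rho := Cmod p2) in *.
  assert (Hrho : 0 < rho) by (pose proof (Rinv_0_lt_compat Rr HR); lra).
  assert (HlnL : Rabs (ln rho) <= L).
  { unfold L. assert (ln rho <= ln Rr) by (apply ln_le; lra).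
    assert (ln (/ Rr) <= ln rho) by (apply ln_le; [apply Rinv_0_lt_compat|]; lra).
    rewrite ln_Rinv in H0 by lra. apply Rabs_le. split.
    - pose proof (Rle_abs (ln Rr)). lra.
    - pose proof (Rle_abs (ln Rr)). lra. }
  destruct (polar p2 Hrho) as [t [Ht Hpt]].
  destruct (root3_val i Hi) as [a0 [Ha0 Ha0b]].
  pose proof PI_RGT_0 as HPI. pose proof PI_4 as HPI4.
  set (a := a0 + 2 * INR 1 * PI).
  assert (Hea : ee a = root3 i).
  { rewrite Ha0. unfold ee, a. rewrite cos_period, sin_period. reflexivity. }
  set (x := (N * a - t) / (2 * PI)).
  assert (Hx : 0 <= x).
  { unfold x, a. simpl INR. apply Rmult_le_pos; [|left; apply Rinv_0_lt_compat; lra]. nra. }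
  destruct (nat_above x Hx) as [k Hk].
  set (phi := (t + 2 * INR k * PI) / N).
  set (d := phi - a).
  assert (Hd : 0 <= d <= 2 * PI / N).
  { unfold d, phi.
    assert (Hxe : N * a = t + 2 * PI * x) by (unfold x; field; lra).
    assert (E : (t + 2 * INR k * PI) / N - a = 2 * PI * (INR k - x) / N).
    { apply Rmult_eq_reg_r with N; [|lra]. unfold Rdiv.
      replace (((t + 2 * INR k * PI) * / N - a) * N) with (t + 2 * INR k * PI - N * a) by (field; lra).
      replace (2 * PI * (INR k - x) * / N * N) with (2 * PI * (INR k - x)) by (field; lra). lra. }
    rewrite E. split.
    - apply Rmult_le_pos; [nra| left; apply Rinv_0_lt_compat; lra].
    - unfold Rdiv. apply Rmult_le_compat_r; [left; apply Rinv_0_lt_compat; lra|]. nra. }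
  set (u := ln rho / N).
  set (s := exp u).
  exists (RtoC s * ee phi)%C. split.
  - rewrite qiter_polar. fold N.
    assert (Hs : s ^ (4 ^ l) = rho).
    { unfold s. rewrite exp_pow_INR. fold N. unfold u. replace (N * (ln rho / N)) with (ln rho) by (field; lra).
      apply exp_ln. exact Hrho. }
    rewrite Hs. replace (N * phi) with (t + 2 * INR k * PI) by (unfold phi; field; lra).
    unfold ee at 1. rewrite cos_period, sin_period. rewrite Hpt. reflexivity.
  - rewrite <- Hea.
    replace (RtoC s * ee phi - ee a)%C with (RtoC (s - 1) * ee phi + (ee (a + d) - ee a))%C.
    2: { unfold d. replace (a + (phi - a)) with phi by ring. apply injective_projections; simpl; ring. }
    eapply Rle_lt_trans; [apply Cmod_triangle|].
    rewrite Cmod_mult, Cmod_R, Cmod_ee, Rmult_1_r.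
    assert (Hd2 : d <= 2).
    { destruct Hd as [_ Hd]. eapply Rle_trans; [exact Hd|].
      apply Rmult_le_reg_r with N; [lra|]. unfold Rdiv. rewrite Rmult_assoc, Rinv_l by lra. nra. }
    pose proof (ee_dist a d ltac:(lra)) as Hed.
    pose proof (exp_m1_bound u) as Hu.
    assert (Hu1 : Rabs u <= L / N).
    { unfold u, Rdiv. rewrite Rabs_mult, Rabs_inv, (Rabs_pos_eq N) by lra.
      apply Rmult_le_compat_r; [left; apply Rinv_0_lt_compat; lra| exact HlnL]. }
    assert (HL0 : 0 <= L) by apply Rabs_pos.
    assert (Hu2 : L / N <= L).
    { unfold Rdiv. rewrite <- (Rmult_1_r L) at 2. apply Rmult_le_compat_l; [lra|].
      rewrite <- Rinv_1. apply Rinv_le_contravar; lra. }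
    assert (Hex : exp (Rabs u) <= exp L).
    { destruct (Req_dec (Rabs u) L) as [E|E]; [rewrite E; lra|]. left; apply exp_increasing; lra. }
    assert (Hb : Rabs (s - 1) <= L / N * exp L).
    { unfold s. eapply Rle_trans; [exact Hu|]. apply Rmult_le_compat; try lra. apply Rabs_pos. left; apply exp_pos. }
    assert (E : (L * exp L + 2 * PI + 1) / N = L / N * exp L + 2 * PI / N + 1 / N) by (field; lra).
    fold L. rewrite E.
    assert (0 < 1 / N) by (unfold Rdiv; rewrite Rmult_1_l; apply Rinv_0_lt_compat; lra).
    lra.
Qed.

Lemma closure_bounds M Rr p :
  closure2 (fun p' => cdisc M (fst p') /\ cdisc Rr (snd p') /\ ~ cdisc (/ Rr) (snd p')) p ->
  Cmod (fst p) <= M /\ / Rr <= Cmod (snd p) <= Rr.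
Proof.
  intros Hc. unfold cdisc in Hc. split; [|split].
  - apply Rnot_lt_le. intro H. destruct (Hc (Cmod (fst p) - M) ltac:(lra)) as [p' [[H1 _] [H2 _]]].
    pose proof (Cmod_lower (fst p) (fst p')). lra.
  - apply Rnot_lt_le. intro H. destruct (Hc (/ Rr - Cmod (snd p)) ltac:(lra)) as [p' [[_ [_ H1]] [_ H2]]].
    apply H1. pose proof (Cmod_lower (snd p') (snd p)).
    rewrite <- Cmod_opp in H2. replace (- (snd p - snd p'))%C with (snd p' - snd p)%C in H2
      by (apply injective_projections; simpl; ring). lra.
  - apply Rnot_lt_le. intro H. destruct (Hc (Cmod (snd p) - Rr) ltac:(lra)) as [p' [[_ [H1 _]] [_ H2]]].
    pose proof (Cmod_lower (snd p) (snd p')). lra.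
Qed.

Theorem lemma6p1 (Rr : R) (HR : 0 < Rr) :
  exists (lam eps0 : R) (l0 : nat) (U : nat -> nat -> C -> Prop),
    0 < lam < 1 /\ 0 < eps0 /\ (1 <= l0)%nat /\
    (* each U i l is a neighborhood of r_i *)
    (forall i l, (1 <= i <= 3)%nat -> (l0 <= l)%nat -> locally (root3 i) (U i l)) /\
    (* diameters converge exponentially fast to 0 *)
    (exists (K theta : R), 0 < K /\ 0 < theta < 1 /\
       forall i l, (1 <= i <= 3)%nat -> (l0 <= l)%nat ->
         forall x y, U i l x -> U i l y -> Cmod (x - y) <= K * theta ^ l) /\
    (* covering property *)
    (forall (l : nat) (alpha : C), (l0 <= l)%nat -> alpha <> 0%C ->
       forall p : C * C,
         closure2 (fun p' => cdisc (Cmod alpha / eps0) (fst p') /\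
                             cdisc Rr (snd p') /\ ~ cdisc (/ Rr) (snd p')) p ->
         exists z w, cdisc (Cmod alpha / eps0) z /\
                     (exists i, (1 <= i <= 3)%nat /\ U i l w) /\
                     g_map lam alpha l (z, w) = p).
Proof.
  set (D := Rabs (ln Rr) * exp (Rabs (ln Rr)) + 2 * PI + 1).
  assert (HD : 1 <= D).
  { unfold D. pose proof (Rabs_pos (ln Rr)). pose proof (exp_pos (Rabs (ln Rr))). pose proof PI_RGT_0. nra. }
  destruct (nat_above (4 * D) ltac:(lra)) as [k0 Hk0].
  set (U := fun (i l : nat) (w : C) => Cmod (w - root3 i) < D / INR (4 ^ l)).
  assert (HN : forall l, (S k0 <= l)%nat -> 4 * D < INR (4 ^ l) /\ 4 <= INR (4 ^ l)).
  { intros l Hl. split.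
    - eapply Rlt_le_trans; [apply Hk0|]. apply le_INR.
      pose proof (Nat.pow_gt_lin_r 4 l ltac:(lia)). lia.
    - replace 4 with (INR (4 ^ 1)) by (simpl; lra). apply le_INR. apply Nat.pow_le_mono_r; lia. }
  exists (998/1000), (1/100), (S k0), U.
  split; [lra|]. split; [lra|]. split; [lia|]. split; [|split].
  - intros i l Hi Hl. destruct (HN l Hl) as [_ H4].
    assert (Hpos : 0 < D / (2 * INR (4 ^ l))).
    { apply Rdiv_lt_0_compat; lra. }
    exists (mkposreal _ Hpos). intros y Hy.
    apply C_NormedModule_mixin_compat2 in Hy. simpl in Hy. unfold U.
    change (minus y (root3 i)) with (y - root3 i)%C in Hy.
    eapply Rlt_le_trans; [exact Hy|].
    assert (sqrt 2 <= 2).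
    { pose proof (sqrt_sqrt 2 ltac:(lra)). pose proof (sqrt_pos 2). nra. }
    unfold Rdiv. rewrite Rinv_mult. 
    assert (0 < / INR (4 ^ l)) by (apply Rinv_0_lt_compat; lra).
    assert (0 < D * / INR (4 ^ l)) by (apply Rmult_lt_0_compat; lra).
    replace (D * (/ 2 * / INR (4 ^ l))) with (/ 2 * (D * / INR (4 ^ l))) by ring. nra.
  - exists (2 * D), (/ 2). split; [lra|]. split; [lra|].
    intros i l Hi Hl x y Hx Hy. unfold U in Hx, Hy.
    eapply Rle_trans; [apply (Cmod_tri_sub x y (root3 i))|].
    assert (E : D / INR (4 ^ l) = D * (/ 4) ^ l).
    { rewrite pow_INR. replace (INR 4) with 4 by (simpl; lra). rewrite pow_inv. reflexivity. }
    assert ((/ 4) ^ l <= (/ 2) ^ l) by (apply pow_incr; lra). nra.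
  - intros l alpha Hl Halpha p Hc.
    destruct (closure_bounds _ _ _ Hc) as [Hp1 Hp2].
    destruct (HN l Hl) as [HN1 HN2].
    assert (Ha : 0 < Cmod alpha) by (apply Cmod_gt_0; exact Halpha).
    set (v := (fst p / alpha)%C).
    assert (Hv : Cmod v <= 100).
    { unfold v. rewrite Cmod_div by exact Halpha.
      apply Rmult_le_reg_r with (Cmod alpha); [lra|]. unfold Rdiv.
      rewrite Rmult_assoc, Rinv_l by lra. replace (Cmod alpha / (1/100)) with (100 * Cmod alpha) in Hp1 by (field; lra). lra. }
    destruct (choose_root v) as [i [Hi Hri]].
    destruct (root_exists Rr l i (snd p) ltac:(lia) Hi Hp2 HR) as [w [Hw Hwd]].
    fold D in Hwd.
    set (z := (RtoC (/ (998/1000)) * (alpha * (v - w)))%C).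
    exists z, w. split; [|split].
    + unfold cdisc, z. rewrite !Cmod_mult, Cmod_R, Rabs_pos_eq by lra.
      assert (Hwr : Cmod (w - root3 i) <= 1/4).
      { left. eapply Rlt_le_trans; [exact Hwd|]. apply Rmult_le_reg_r with (INR (4 ^ l)); [lra|].
        unfold Rdiv. rewrite Rmult_assoc, Rinv_l by lra. lra. }
      assert (Hvr : Cmod (v - root3 i) <= 9951 / 100).
      { assert (Hrr : fst (root3 i) ^ 2 + snd (root3 i) ^ 2 = 1).
        { unfold root3; simpl. pose proof (sin2_cos2 (2 * PI * INR (i - 1) / 3)). unfold Rsqr in H. nra. }
        apply Cmod_le_sq; [lra|].
        pose proof (Cmod_sq v) as Hm. pose proof (Cmod_ge_0 v).
        clearbody v. generalize dependent (root3 i). intros r Hri Hrr.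
        destruct v as [v1 v2]. destruct r as [r1 r2]. simpl in *.
        set (m := Cmod (v1, v2)) in *.
        assert ((m - 100) * (m + 99) <= 0) by nra.
        nra. }
      assert (Hvw : Cmod (v - w) < 998 / 10).
      { replace (v - w)%C with ((v - root3 i) + - (w - root3 i))%C
          by (apply injective_projections; simpl; ring).
        eapply Rle_lt_trans; [apply Cmod_triangle|]. rewrite Cmod_opp. lra. }
      pose proof (Cmod_ge_0 (v - w)).
      replace (Cmod alpha / (1/100)) with (/ (998 / 1000) * (Cmod alpha * (998/10))) by (field; lra).
      apply Rmult_lt_compat_l; [lra|]. apply Rmult_lt_compat_l; lra.
    + exists i. split; [exact Hi|]. exact Hwd.
    + unfold g_map, z, v. simpl. rewrite Hw. destruct p as [p1 p2]. simpl.
      f_equal.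
      assert (RtoC (998/1000) <> 0%C).
      { intro E. apply (f_equal fst) in E. simpl in E. lra. }
      rewrite RtoC_inv by lra. field. split; assumption.
Qed.
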